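(* Let $n\ge0$. If a variety $\mathcal V$ has $n+2$ Gumm terms, then $\mathcal V$ is $(2n+2)$-modular, i.e. it satisfies $\alpha(\beta\circ\alpha\gamma\circ\beta)\subseteq\alpha\beta\circ_{2n+2}\alpha\gamma$ for all congruences $\alpha,\beta,\gamma$.
   Context: $\circ$ is relational composition, juxtaposition is intersection. For relations $X,Y$ and $m\ge1$, $X\circ_m Y$ denotes $X\circ Y\circ X\circ\cdots$ with $m$ factors. A variety has $n+2$ Gumm terms if it has ternary terms $p,j_1,\dots,j_{n+1}$ satisfying: $x=j_i(x,y,x)$ for all $i$; $x=p(x,z,z)$; $p(x,x,z)=j_1(x,x,z)$; $j_i(x,z,z)=j_{i+1}(x,z,z)$ for odd $i\le n$; $j_i(x,x,z)=j_{i+1}(x,x,z)$ for even $i\le n$; $j_{n+1}(x,y,z)=z$. *)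

(* Defs.v *)
From mathcomp Require Import all_boot.
Set Implicit Arguments. Unset Strict Implicit. Unset Printing Implicit Defensive.

Record signature := Signature { op_sym : Type; arity : op_sym -> nat }.

Inductive term (S : signature) (X : Type) : Type :=
  | tvar : X -> term S X
  | tapp : forall f : op_sym S, ('I_(arity f) -> term S X) -> term S X.
Arguments tvar {S X}.
Arguments tapp {S X}.

Record algebra (S : signature) := Algebra {
  carrier :> Type;
  interp : forall f : op_sym S, ('I_(arity f) -> carrier) -> carrier }.

Fixpoint eval (S : signature) (A : algebra S) (X : Type) (v : X -> A)
  (t : term S X) : A :=
  match t with
  | tvar x => v x
  | tapp f args => @interp S A f (fun i => eval v (args i))
  end.

Definition equation (S : signature) := (term S nat * term S nat)%type.

(* A variety, given (by Birkhoff's theorem) by a set of defining identities. *)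
Definition variety (S : signature) := equation S -> Prop.

Definition in_variety (S : signature) (V : variety S) (A : algebra S) : Prop :=
  forall e, V e -> forall v : nat -> A, eval v e.1 = eval v e.2.

(* Ternary terms: terms in the variables x, y, z (indexed 0, 1, 2). *)
Definition tterm (S : signature) := term S 'I_3.

Definition val3 (T : Type) (a b c : T) : 'I_3 -> T :=
  fun i => match val i with 0 => a | 1 => b | _ => c end.

Definition top3 (S : signature) (A : algebra S) (t : tterm S) (a b c : A) : A :=
  eval (val3 a b c) t.
Arguments top3 {S} A t a b c.

Definition holds3 (S : signature) (V : variety S) (s t : tterm S) : Prop :=
  forall A : algebra S, in_variety V A ->
    forall a b c : A, top3 A s a b c = top3 A t a b c.

(* p, j_1, ..., j_{n+1} are n+2 Gumm terms for V (j indexed by 1..n+1). *)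
Definition gumm_terms (S : signature) (V : variety S) (n : nat)
  (p : tterm S) (j : nat -> tterm S) : Prop :=
  (forall i, 1 <= i <= n.+1 -> forall A : algebra S, in_variety V A ->
          forall x y : A, x = top3 A (j i) x y x) /\
  [/\ (forall A : algebra S, in_variety V A ->
          forall x z : A, x = top3 A p x z z),
      (forall A : algebra S, in_variety V A ->
          forall x z : A, top3 A p x x z = top3 A (j 1) x x z),
      (forall i, 1 <= i <= n -> odd i -> forall A : algebra S, in_variety V A ->
          forall x z : A, top3 A (j i) x z z = top3 A (j i.+1) x z z),
      (forall i, 1 <= i <= n -> ~~ odd i -> forall A : algebra S, in_variety V A ->
          forall x z : A, top3 A (j i) x x z = top3 A (j i.+1) x x z)
    & (forall A : algebra S, in_variety V A ->
          forall x y z : A, top3 A (j n.+1) x y z = z)].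

Definition has_gumm_terms (S : signature) (V : variety S) (n : nat) : Prop :=
  exists p j, gumm_terms V n p j.

Definition relA (T : Type) := T -> T -> Prop.

Definition is_congruence {S : signature} (A : algebra S) (R : relA A) : Prop :=
  [/\ (forall a, R a a), (forall a b, R a b -> R b a),
      (forall a b c, R a b -> R b c -> R a c)
    & (forall f (u w : 'I_(arity f) -> A),
         (forall i, R (u i) (w i)) -> R (@interp S A f u) (@interp S A f w))].

Definition rcomp (T : Type) (X Y : relA T) : relA T :=
  fun a c => exists b, X a b /\ Y b c.

Definition rmeet (T : Type) (X Y : relA T) : relA T := fun a b => X a b /\ Y a b.

(* X o_m Y = X o Y o X o ... with m factors (m >= 1); m = 0 gives equality. *)
Fixpoint rcomp_alt (T : Type) (m : nat) (X Y : relA T) : relA T :=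
  match m with
  | 0 => fun a b => a = b
  | 1 => X
  | m'.+1 => rcomp X (rcomp_alt m' Y X)
  end.

Definition rsub (T : Type) (X Y : relA T) : Prop := forall a b, X a b -> Y a b.

Definition k_modular (S : signature) (V : variety S) (k : nat) : Prop :=
  forall A : algebra S, in_variety V A ->
  forall alpha beta gamma : relA A,
    is_congruence alpha -> is_congruence beta -> is_congruence gamma ->
    rsub (rmeet alpha (rcomp beta (rcomp (rmeet alpha gamma) beta)))
         (rcomp_alt k (rmeet alpha beta) (rmeet alpha gamma)).

(* Main.v *)
Require Import Defs.
From mathcomp Require Import all_boot.

Section Aux.
Variable S : signature.

Fixpoint cong_eval (A : algebra S) (R : relA A) (HR : is_congruence R)
  (X : Type) (v w : X -> A) (Hvw : forall x, R (v x) (w x)) (t : term S X)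
  {struct t} : R (eval v t) (eval w t) :=
  match t return R (eval v t) (eval w t) with
  | tvar x => Hvw x
  | tapp f args =>
      let: And4 _ _ _ Hc := HR in
      Hc f _ _ (fun i => cong_eval A R HR X v w Hvw (args i))
  end.

Lemma cong_top3 (A : algebra S) (R : relA A) (HR : is_congruence R) t
  a b c a' b' c' : R a a' -> R b b' -> R c c' ->
  R (top3 A t a b c) (top3 A t a' b' c').
Proof.
move=> Ha Hb Hc; apply: cong_eval => // i; rewrite /val3.
by case: i => [[|[|m]] ?] /=.
Qed.
End Aux.
Arguments cong_top3 {S A R}.
Set Implicit Arguments. Unset Strict Implicit.

Lemma rcons_alt (T : Type) (X Y : relA T) m a x b :
  X a x -> rcomp_alt m Y X x b -> rcomp_alt m.+1 X Y a b.
Proof. by case: m => [|m] /= H1 H2; [subst | exists x]. Qed.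

Lemma rsnoc_alt (T : Type) m : forall (X Y : relA T) a b c,
  rcomp_alt m X Y a b -> (if odd m then Y else X) b c ->
  rcomp_alt m.+1 X Y a c.
Proof.
elim: m => [|m IH] X Y a b c /=.
  by move=> ->.
case: m IH => [|k] IH /=.
  by move=> H1 H2; exists b.
move=> [x [H1 H2]] H3; exists x; split => //.
apply: (IH Y X x b c) => //.
by move: H3; rewrite /= ?negbK; case: (odd k).
Qed.

Lemma rrev_alt (T : Type) (X Y : relA T) :
  (forall a b, X a b -> X b a) -> (forall a b, Y a b -> Y b a) ->
  forall m a b, rcomp_alt m X Y a b ->
  rcomp_alt m (if odd m then X else Y) (if odd m then Y else X) b a.
Proof.
move=> sX sY m; elim: m X Y sX sY => [|m IH] X Y sX sY a b.
  by move=> /= ->.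
case: m IH => [|k] IH.
  by apply: sX.
move=> [x [H1 H2]].
have H3 := IH Y X sY sX x b H2.
have H4 := @rsnoc_alt T k.+1 _ _ b x a H3.
have -> : odd k.+2 = odd k by rewrite /= negbK.
move: H4; rewrite [odd k.+1]/= .
case Ho: (odd k) => /= H4; apply: H4; exact: sX.
Qed.

Ltac ct := match goal with H : is_congruence ?R |- ?R _ _ => apply: (cong_top3 H) end; try done.

Theorem proposition5p2 (S : signature) (V : variety S) (n : nat) :
  has_gumm_terms V n -> k_modular V (2 * n + 2).
Proof.
move=> [p [j [Hj [Hp Hp1 Hodd Hev Hlast]]]] A HA al be ga Cal Cbe Cga.
move=> a c [Hac [d [Had [e [[Hde Gde] Hec]]]]].
have Cal' := Cal; have Cbe' := Cbe; have Cga' := Cga.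
case: Cal => rA sA tA _; case: Cbe => rB sB tB _; case: Cga => rG sG tG _.
set ab := rmeet al be; set ag := rmeet al ga.
have sab : forall x y, ab x y -> ab y x by move=> x y [? ?]; split; auto.
have sag : forall x y, ag x y -> ag y x by move=> x y [? ?]; split; auto.
pose y i := if odd i then e else d.
pose y' i := if odd i then d else e.
have Jal : forall i z, 1 <= i <= n.+1 -> al (top3 A (j i) c z a) c.
  move=> i z Hi; rewrite {2}(Hj i Hi A HA c z).
  by ct; apply: sA.
have yd : forall i, ga (y i) (y' i) /\ al (y i) (y' i).
  by move=> i; rewrite /y /y'; case: (odd i); split; auto.
have step : forall i, 1 <= i <= n ->
  ag (top3 A (j i) c (y i) a) (top3 A (j i) c (y' i) a) /\
  ab (top3 A (j i) c (y' i) a) (top3 A (j i.+1) c (y i.+1) a).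
  move=> i /andP [Hi1 Hin].
  have Hi : 1 <= i <= n.+1 by rewrite Hi1 /= ltnW.
  have Hi' : 1 <= i.+1 <= n.+1 by rewrite /= ltnS.
  have [G1 A1] := yd i.
  split.
    split; last by ct.
    by apply: (tA _ c); [apply: Jal | apply: sA; apply: Jal].
  split.
    by apply: (tA _ c); [apply: Jal | apply: sA; apply: Jal].
  rewrite /y' /y /=; case Ho: (odd i) => /=.
  - apply: (tB _ (top3 A (j i) c a a)); first by ct; apply: sB.
    rewrite (Hodd i (introT andP (conj Hi1 Hin)) Ho A HA c a).
    by ct.
  - apply: (tB _ (top3 A (j i) c c a)); first by ct.
    rewrite (Hev i (introT andP (conj Hi1 Hin)) (negbT Ho) A HA c a).
    by ct; apply: sB.
have chain : forall k i, i + k = n.+1 -> 1 <= i ->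
  rcomp_alt (2 * k) ag ab (top3 A (j i) c (y i) a) a.
  elim=> [|k IH] i Hik Hi1.
    by rewrite addn0 in Hik; subst i; rewrite /= Hlast.
  have Hin : 1 <= i <= n.
    by rewrite Hi1 /=; move: Hik; rewrite addnS => [[<-]]; apply: leq_addr.
  have [S1 S2] := step i Hin.
  have -> : 2 * k.+1 = (2 * k).+2 by rewrite mulnS.
  apply: (rcons_alt S1); apply: (rcons_alt S2).
  by apply: IH => //; rewrite addSn -addnS.
have Hc1 := chain n 1 (add1n n) (leqnn 1).
have Hn1 : 1 <= 1 <= n.+1 by [].
have P1 : ag c (top3 A p c e d).
  split; rewrite {1}(Hp A HA c d); ct; auto.
have P2 : ab (top3 A p c e d) (top3 A (j 1) c (y 1) a).
  split.
    apply: (tA _ c).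
      by rewrite {2}(Hp A HA c d); ct; auto.
    by apply: sA; apply: Jal.
  apply: (tB _ (top3 A p c c a)); first by ct; apply: sB.
  by rewrite (Hp1 A HA c a) /y /=; ct; apply: sB.
have H := rcons_alt P1 (rcons_alt P2 Hc1).
have := rrev_alt sag sab H.
by rewrite addn2 /= negbK mul2n odd_double; apply.
Qed.
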